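(* Let $\kappa<\kappa'$ be regular cardinals. Then the inclusion functor $\mathbf{CAMA}_{\kappa'}\hookrightarrow\mathbf{CAMA}_\kappa$ and the inclusion functor $\mathbf{MKF}_{\kappa'}\hookrightarrow\mathbf{MKF}_\kappa$ are not essentially surjective; i.e. there is an object of $\mathbf{CAMA}_\kappa$ not isomorphic to any object of $\mathbf{CAMA}_{\kappa'}$, and an object of $\mathbf{MKF}_\kappa$ not isomorphic to any object of $\mathbf{MKF}_{\kappa'}$.
   Context: A modal algebra is a Boolean algebra with a unary operation $\Diamond$ satisfying $\Diamond 0=0$ and $\Diamond(x\vee y)=\Diamond x\vee\Diamond y$; complete/atomic refer to the Boolean reduct; for a cardinal $\lambda$ it is $\lambda$-additive if $\Diamond\bigvee X=\bigvee_{x\in X}\Diamond x$ for every $X$ with $|X|<\lambda$. A homomorphism of complete modal algebras is a Boolean homomorphism preserving all joins and meets and commuting with $\Diamond$. $\mathbf{CAMA}_\lambda$ is the category of $\lambda$-additive complete atomic modal algebras with these homomorphisms. A multi-relational Kripke frame is a pair $\langle W,S\rangle$ with $W$ non-empty and $S$ a non-empty set of binary relations on $W$; it is $\lambda$-downward directed if for every $S'\subseteq S$ with $|S'|<\lambda$ there is $R\in S$ with $R\subseteq\bigcap S'$ (with $\bigcap\emptyset=W\times W$). A homomorphism $f:\langle W_1,S_1\rangle\to\langle W_2,S_2\rangle$ is a map $f:W_1\to W_2$ such that: (i) for every $x\in W_1$ and $R_2\in S_2$ there is $R_1\in S_1$ such that for all $y\in W_1$, $xR_1y$ implies $f(x)R_2f(y)$;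 (ii) for every $x\in W_1$ and $R_1\in S_1$ there is $R_2\in S_2$ such that for all $u\in W_2$, if $f(x)R_2u$ then there exists $y\in W_1$ with $xR_1y$ and $f(y)=u$; an isomorphism is a bijective homomorphism. $\mathbf{MKF}_\lambda$ is the category of $\lambda$-downward directed multi-relational Kripke frames with these homomorphisms. A functor is essentially surjective if every object of the target is isomorphic to the image of some object. *)

(* Defs.v *)
From Stdlib Require Import Classical FunctionalExtensionality PropExtensionality.

Definition injective_fun {A B : Type} (f : A -> B) : Prop :=
  forall x y, f x = f y -> x = y.

Definition surjective_fun {A B : Type} (f : A -> B) : Prop :=
  forall y, exists x, f x = y.

Definition card_le (A B : Type) : Prop := exists f : A -> B, injective_fun f.

Definition card_lt (A B : Type) : Prop := card_le A B /\ ~ card_le B A.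

Definition regular_cardinal (K : Type) : Prop :=
  card_le nat K /\
  forall (I : Type) (A : I -> Type),
    card_lt I K -> (forall i, card_lt (A i) K) -> card_lt {i : I & A i} K.

Record BoolAlg := {
  ba_car :> Type;
  ba_join : ba_car -> ba_car -> ba_car;
  ba_meet : ba_car -> ba_car -> ba_car;
  ba_compl : ba_car -> ba_car;
  ba_bot : ba_car;
  ba_top : ba_car;
  ba_joinC : forall x y, ba_join x y = ba_join y x;
  ba_meetC : forall x y, ba_meet x y = ba_meet y x;
  ba_joinA : forall x y z, ba_join x (ba_join y z) = ba_join (ba_join x y) z;
  ba_meetA : forall x y z, ba_meet x (ba_meet y z) = ba_meet (ba_meet x y) z;
  ba_joinK : forall x y, ba_join x (ba_meet x y) = x;
  ba_meetK : forall x y, ba_meet x (ba_join x y) = x;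
  ba_meetDr : forall x y z,
      ba_meet x (ba_join y z) = ba_join (ba_meet x y) (ba_meet x z);
  ba_join0 : forall x, ba_join x ba_bot = x;
  ba_meet1 : forall x, ba_meet x ba_top = x;
  ba_joinCr : forall x, ba_join x (ba_compl x) = ba_top;
  ba_meetCr : forall x, ba_meet x (ba_compl x) = ba_bot
}.

Arguments ba_join {b} _ _.
Arguments ba_meet {b} _ _.
Arguments ba_compl {b} _.
Arguments ba_bot {b}.
Arguments ba_top {b}.

Definition ba_le {B : BoolAlg} (x y : B) : Prop := ba_join x y = y.

Definition is_lub {B : BoolAlg} (X : B -> Prop) (s : B) : Prop :=
  (forall x, X x -> ba_le x s) /\
  (forall u, (forall x, X x -> ba_le x u) -> ba_le s u).

Definition is_glb {B : BoolAlg} (X : B -> Prop) (s : B) : Prop :=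
  (forall x, X x -> ba_le s x) /\
  (forall u, (forall x, X x -> ba_le u x) -> ba_le u s).

Definition img {A B : Type} (f : A -> B) (X : A -> Prop) : B -> Prop :=
  fun y => exists x, X x /\ y = f x.

Definition ba_complete (B : BoolAlg) : Prop :=
  forall X : B -> Prop, exists s, is_lub X s.

Definition ba_atom {B : BoolAlg} (a : B) : Prop :=
  a <> ba_bot /\ forall b : B, ba_le b a -> b = ba_bot \/ b = a.

Definition ba_atomic (B : BoolAlg) : Prop :=
  forall x : B, x <> ba_bot -> exists a, ba_atom a /\ ba_le a x.

Record ModalAlg := {
  ma_ba :> BoolAlg;
  ma_dia : ma_ba -> ma_ba;
  ma_dia0 : ma_dia ba_bot = ba_bot;
  ma_diaD : forall x y, ma_dia (ba_join x y) = ba_join (ma_dia x) (ma_dia y)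
}.

Arguments ma_dia {m} _.

Definition additive (lam : Type) (M : ModalAlg) : Prop :=
  forall (X : M -> Prop) (s : M),
    card_lt {x : M | X x} lam -> is_lub X s -> is_lub (img ma_dia X) (ma_dia s).

Record CAMA (lam : Type) := {
  cama_alg :> ModalAlg;
  cama_complete : ba_complete cama_alg;
  cama_atomic : ba_atomic cama_alg;
  cama_additive : additive lam cama_alg
}.

Definition cma_hom (A B : ModalAlg) (f : A -> B) : Prop :=
  (forall x y, f (ba_join x y) = ba_join (f x) (f y)) /\
  (forall x y, f (ba_meet x y) = ba_meet (f x) (f y)) /\
  (forall x, f (ba_compl x) = ba_compl (f x)) /\
  f ba_bot = ba_bot /\ f ba_top = ba_top /\
  (forall X s, is_lub X s -> is_lub (img f X) (f s)) /\
  (forall X s, is_glb X s -> is_glb (img f X) (f s)) /\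
  (forall x, f (ma_dia x) = ma_dia (f x)).

Definition cma_iso (A B : ModalAlg) : Prop :=
  exists (f : A -> B) (g : B -> A),
    cma_hom A B f /\ cma_hom B A g /\
    (forall x, g (f x) = x) /\ (forall y, f (g y) = y).

Definition rel (W : Type) := W -> W -> Prop.

Record MKF (lam : Type) := {
  mkf_W : Type;
  mkf_W_ne : inhabited mkf_W;
  mkf_S : rel mkf_W -> Prop;
  mkf_S_ne : exists R, mkf_S R;
  (* lambda-downward directed; the empty intersection is W x W *)
  mkf_dd : forall S' : rel mkf_W -> Prop,
      (forall R, S' R -> mkf_S R) ->
      card_lt {R : rel mkf_W | S' R} lam ->
      exists R, mkf_S R /\ (forall x y, R x y -> forall R', S' R' -> R' x y)
}.

Arguments mkf_W {lam} _.
Arguments mkf_S {lam} _.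

Definition frame_hom {W1 W2 : Type} (S1 : rel W1 -> Prop) (S2 : rel W2 -> Prop)
  (f : W1 -> W2) : Prop :=
  (forall x R2, S2 R2 -> exists R1, S1 R1 /\
      forall y, R1 x y -> R2 (f x) (f y)) /\
  (forall x R1, S1 R1 -> exists R2, S2 R2 /\
      forall u, R2 (f x) u -> exists y, R1 x y /\ f y = u).

Definition mkf_iso {l1 l2 : Type} (F : MKF l1) (G : MKF l2) : Prop :=
  exists f : mkf_W F -> mkf_W G,
    frame_hom (mkf_S F) (mkf_S G) f /\ injective_fun f /\ surjective_fun f.

(* Main.v *)
Require Import Defs.
From Stdlib Require Import Classical ClassicalEpsilon FunctionalExtensionality PropExtensionality ProofIrrelevance.

Lemma sig_eq' T (P : T -> Prop) (a b : {x | P x}) : proj1_sig a = proj1_sig b -> a = b.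
Proof. destruct a, b; simpl; intros; subst; f_equal; apply proof_irrelevance. Qed.

Lemma cle_trans A B C : card_le A B -> card_le B C -> card_le A C.
Proof. intros [f Hf] [g Hg]; exists (fun a => g (f a)); intros x y E; auto. Qed.

Lemma cle_lt A B C : card_le A B -> card_lt B C -> card_lt A C.
Proof.
  intros H [H1 H2]; split; [eapply cle_trans; eauto|].
  intro H3; apply H2; eapply cle_trans; eauto.
Qed.

Lemma sub_le T (P Q : T -> Prop) : (forall x, Q x -> P x) -> card_le {x | Q x} {x | P x}.
Proof.
  intros H; exists (fun y => exist P (proj1_sig y) (H _ (proj2_sig y))).
  intros a b E; apply sig_eq'; apply (f_equal (@proj1_sig _ _)) in E; exact E.
Qed.

Lemma small_sub K T (P Q : T -> Prop) :
  (forall x, Q x -> P x) -> card_lt {x | P x} K -> card_lt {x | Q x} K.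
Proof. intros; eapply cle_lt; [apply sub_le|]; eauto. Qed.

Lemma not_le_1 K T : card_le nat K -> (forall a b : T, a = b) -> ~ card_le K T.
Proof.
  intros [j Hj] H [i Hi].
  assert (E : j 0 = j 1) by (apply Hi; apply H). apply Hj in E. discriminate.
Qed.

Lemma small1 K (P : K -> Prop) : card_le nat K ->
  (forall a b, P a -> P b -> a = b) -> card_lt {x | P x} K.
Proof.
  intros HN H; split.
  - exists (@proj1_sig _ _); intros a b E; apply sig_eq'; auto.
  - apply not_le_1; auto. intros a b; apply sig_eq'; destruct a, b; simpl; auto.
Qed.

Lemma bool_lt K : card_le nat K -> card_lt bool K.
Proof.
  intros [j Hj]; split.
  - exists (fun b : bool => if b then j 1 else j 0).
    intros [|] [|] E; auto; apply Hj in E; discriminate.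
  - intros [i Hi].
    assert (A : forall n m, i (j n) = i (j m) -> n = m) by (intros; apply Hj, Hi; auto).
    destruct (i (j 0)) eqn:E0, (i (j 1)) eqn:E1, (i (j 2)) eqn:E2;
    first [ assert (X : 0 = 1) by (apply A; congruence); discriminate
          | assert (X : 0 = 2) by (apply A; congruence); discriminate
          | assert (X : 1 = 2) by (apply A; congruence); discriminate ].
Qed.

Lemma bigunion_small K : regular_cardinal K ->
  forall (I : Type) (A : I -> K -> Prop) (P : K -> Prop),
  card_lt I K -> (forall i, card_lt {y | A i y} K) ->
  (forall y, P y -> exists i, A i y) -> card_lt {y | P y} K.
Proof.
  intros [_ HR] I A P HI HA Hc.
  eapply cle_lt; [| apply (HR I (fun i => {y | A i y}) HI HA)].
  exists (fun y => let e := constructive_indefinite_description _ (Hc _ (proj2_sig y)) in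
             existT (fun i => {z | A i z}) (proj1_sig e) (exist _ (proj1_sig y) (proj2_sig e))).
  intros y1 y2 E; apply (f_equal (fun p : {i : I & {z | A i z}} => proj1_sig (projT2 p))) in E; simpl in E.
  apply sig_eq'; exact E.
Qed.

Lemma union_small K : regular_cardinal K -> forall X Y : K -> Prop,
  card_lt {y | X y} K -> card_lt {y | Y y} K -> card_lt {y | X y \/ Y y} K.
Proof.
  intros HK X Y HX HY.
  apply (bigunion_small K HK bool (fun b => if b then X else Y)).
  - apply bool_lt, HK.
  - intros [|]; auto.
  - intros y [H|H]; [exists true|exists false]; auto.
Qed.
Ltac pext := intros; apply functional_extensionality; intro; apply propositional_extensionality.

Definition PowBA (T : Type) : BoolAlg.
Proof.
  refine (Build_BoolAlg (T -> Prop) (fun x y t => x t \/ y t) (fun x y t => x t /\ y t)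
     (fun x t => ~ x t) (fun _ => False) (fun _ => True) _ _ _ _ _ _ _ _ _ _ _).
  all: try (pext; tauto).
  all: pext; split; [tauto| intros _; apply classic].
Defined.

Lemma pow_le T (x y : PowBA T) : ba_le x y <-> forall t, x t -> y t.
Proof.
  unfold ba_le; simpl; split.
  - intros H t Hx. rewrite <- H. simpl. auto.
  - intros H; pext; split; [intros [A|A]; auto | auto].
Qed.

Lemma pow_lub T (X : PowBA T -> Prop) (s : PowBA T) :
  is_lub X s <-> forall t, s t <-> exists x, X x /\ x t.
Proof.
  split.
  - intros [H1 H2] t; split.
    + intros Hs. assert (L : ba_le s ((fun t => exists x, X x /\ x t) : PowBA T)).
      { apply H2; intros x Hx; apply pow_le; intros; eauto. }
      exact (proj1 (pow_le T _ _) L t Hs).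
    + intros [x [Hx Ht]]. exact (proj1 (pow_le T _ _) (H1 x Hx) t Ht).
  - intros H; split.
    + intros x Hx; apply pow_le; intros t Ht; apply H; eauto.
    + intros u Hu; apply pow_le; intros t Ht; apply H in Ht as [x [Hx Ht]].
      exact (proj1 (pow_le T _ _) (Hu x Hx) t Ht).
Qed.

Section Alg.
Variable K : Type.
Hypothesis HK : regular_cardinal K.

Definition small (X : K -> Prop) := card_lt {y | X y} K.

Definition PowMA : ModalAlg.
Proof.
  refine (Build_ModalAlg (PowBA K) (fun X _ => ~ small X) _ _).
  - simpl; pext; split; [|tauto]. intros H; apply H. apply small1; [apply HK|]. tauto.
  - intros X Y; simpl; pext; split.
    + intros H. destruct (classic (small X)) as [HX|HX]; [|auto].
      destruct (classic (small Y)) as [HY|HY]; [|auto].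
      exfalso; apply H; apply union_small; auto.
    + intros [H|H] H'; apply H; unfold small in *;
        refine (small_sub K K _ _ _ H'); simpl; auto.
Defined.

Lemma PowMA_complete : ba_complete PowMA.
Proof. intros X. exists (fun t => exists x, X x /\ x t). apply pow_lub. tauto. Qed.

Lemma PowMA_atomic : ba_atomic PowMA.
Proof.
  intros x Hx. destruct (classic (exists k, x k)) as [[k Hk]|N].
  - exists (fun j => j = k). split; [split|].
    + intros E. pose proof (equal_f E k) as E'. simpl in E'. rewrite <- E'. reflexivity.
    + intros b Hb0. pose proof (proj1 (pow_le K b _) Hb0) as Hb.
      destruct (classic (exists j, b j)) as [[j Hj]|N].
      * right. pext. split; [auto|]. intros E. specialize (Hb _ Hj). simpl in *. subst; auto.
      * left. pext. split; [intros; apply N; eauto|simpl; tauto].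
    + apply (proj2 (pow_le K _ _)). intros; subst; auto.
  - exfalso; apply Hx. pext. split; [intros; apply N; eauto|simpl; tauto].
Qed.

Lemma PowMA_additive : additive K PowMA.
Proof.
  intros X s HX Hs0. apply (proj2 (pow_lub K _ _)). pose proof (proj1 (pow_lub K X s) Hs0) as Hs.
  intros t; simpl; split.
  - intros Hns. apply NNPP; intros N. apply Hns.
    apply (bigunion_small K HK {x | X x} (fun i => proj1_sig i)); auto.
    + intros [i Hi]; simpl. apply NNPP; intros N'. apply N.
      exists (fun _ => ~ small i). split; [exists i; auto|auto].
    + intros y Hy. apply Hs in Hy as [x [Hx Hy]]. exists (exist _ x Hx); auto.
  - intros [z [[x [Hx ->]] Hz]] Hs'. apply Hz.
    eapply small_sub; [|exact Hs']. intros y Hy; apply Hs; eauto.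
Qed.

Definition A0 : CAMA K := Build_CAMA K PowMA PowMA_complete PowMA_atomic PowMA_additive.

Lemma A0_not_add K' : card_lt K K' -> ~ additive K' PowMA.
Proof.
  intros HKK Hadd.
  set (X := fun x : PowMA => exists k, x = (fun j => j = k)).
  assert (Hs : is_lub X ((fun _ => True) : PowBA K)).
  { apply (proj2 (pow_lub K _ _)). intros t; split; [|auto]. intros _; exists (fun j => j = t); split; [exists t|]; auto. }
  assert (HX : card_lt {x | X x} K').
  { eapply cle_lt; [|exact HKK].
    exists (fun x : {x | X x} => proj1_sig (constructive_indefinite_description (fun k => proj1_sig x = (fun j => j = k)) (proj2_sig x))).
    intros [a Ha] [b Hb]; simpl; intros E.
    apply sig_eq'; simpl.
    pose proof (proj2_sig (constructive_indefinite_description (fun k => a = (fun j => j = k)) Ha)) as Ea.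
    pose proof (proj2_sig (constructive_indefinite_description (fun k => b = (fun j => j = k)) Hb)) as Eb.
    simpl in Ea, Eb. rewrite E in Ea. congruence. }
  specialize (Hadd X _ HX Hs). pose proof (proj1 (pow_lub K _ _) Hadd) as Hadd'. clear Hadd. rename Hadd' into Hadd.
  destruct HK as [[j Hj] _].
  destruct (proj1 (Hadd (j 0))) as [z [[x [[k ->] ->]] Hz]].
  - simpl. intros [_ H]. apply H. exists (fun k => exist (fun _ => True) k I).
    intros a b E; apply (f_equal (@proj1_sig _ _)) in E; auto.
  - apply Hz. simpl. apply small1; [exists j; auto|]. intros; congruence.
Qed.
End Alg.

Lemma iso_add K' (A B : ModalAlg) : cma_iso A B -> additive K' B -> additive K' A.
Proof.
  intros (f & g & Hf & Hg & gf & fg) HB X s HX Hs.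
  destruct Hf as (_&_&_&_&_&flub&_&fdia).
  destruct Hg as (_&_&_&_&_&glub&_&gdia).
  assert (HY : card_lt {y | img f X y} K').
  { eapply cle_lt; [|exact HX].
    unshelve eexists (fun y => exist X (g (proj1_sig y)) _).
    - destruct y as [y [x [Hx ->]]]; simpl; rewrite gf; auto.
    - intros a b E; apply (f_equal (@proj1_sig _ _)) in E; simpl in E.
      apply sig_eq'; rewrite <- (fg (proj1_sig a)), <- (fg (proj1_sig b)); congruence. }
  specialize (HB _ _ HY (flub _ _ Hs)). apply glub in HB.
  rewrite gdia, gf in HB.
  replace (img ma_dia X) with (img g (img ma_dia (img f X))); auto.
  pext; split.
  - intros [z [[w [[x0 [Hx ->]] ->]] ->]]. exists x0; split; auto. rewrite gdia, gf; auto.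
  - intros [x0 [Hx ->]]. exists (ma_dia (f x0)). split; [exists (f x0); split; [exists x0|]|]; auto.
    rewrite gdia, gf; auto.
Qed.

Section Frame.
Variable K : Type.
Hypothesis HK : regular_cardinal K.

Definition S0 (R : rel K) : Prop :=
  exists A : K -> Prop, card_lt {y | ~ A y} K /\ R = (fun _ y => A y).

Lemma F0_ne : inhabited K.
Proof. destruct HK as [[j _] _]; exact (inhabits (j 0)). Qed.

Lemma F0_S_ne : exists R, S0 R.
Proof.
  exists (fun _ _ => True). exists (fun _ => True). split; auto.
  apply small1; [apply HK|]. tauto.
Qed.

Lemma F0_dd : forall S' : rel K -> Prop,
  (forall R, S' R -> S0 R) -> card_lt {R : rel K | S' R} K ->
  exists R, S0 R /\ (forall x y, R x y -> forall R', S' R' -> R' x y).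
Proof.
  intros S' HS HC.
  set (As := fun y => forall R', S' R' -> forall x, R' x y).
  exists (fun _ y => As y). split.
  - exists As; split; auto.
    apply (bigunion_small K HK {R | S' R} (fun i y => exists x, ~ proj1_sig i x y)); auto.
    + intros [R HR]; simpl. destruct (HS R HR) as [A [HA ->]].
      refine (small_sub K K _ _ _ HA). intros y [x Hx]; auto.
    + intros y Hy. apply NNPP; intros N. apply Hy. intros R' HR' x.
      apply NNPP; intros N'. apply N. exists (exist _ R' HR'); simpl; eauto.
  - intros x y H R' HR'; apply H; auto.
Qed.

Definition F0 : MKF K := Build_MKF K K F0_ne S0 F0_S_ne F0_dd.

Lemma F0_not K' (G : MKF K') : card_lt K K' -> ~ mkf_iso F0 G.
Proof.
  intros HKK [f [[Hi Hii] [Hinj _]]].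
  destruct HK as [[j Hj] _].
  set (x0 := j 0 : mkf_W F0).
  assert (HS1 : forall k, S0 (fun _ y => y <> k)).
  { intros k. exists (fun y => y <> k). split; auto. apply small1; [exists j; auto|].
    intros a b Ha Hb. apply NNPP in Ha; apply NNPP in Hb. congruence. }
  assert (C : forall k, exists R2, mkf_S G R2 /\
             forall u, R2 (f x0) u -> exists y, y <> k /\ f y = u).
  { intros k. destruct (Hii x0 _ (HS1 k)) as [R2 [H1 H2]]. exists R2; split; auto. }
  destruct (choice _ C) as [R2 HR2].
  set (S' := fun R => exists k, R = R2 k).
  destruct (mkf_dd K' G S') as [R [HR HRS]].
  - intros R [k ->]; apply HR2.
  - eapply cle_lt; [|exact HKK].
    exists (fun x : {R | S' R} => proj1_sig (constructive_indefinite_description (fun k => proj1_sig x = R2 k) (proj2_sig x))).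
    intros [a Ha] [b Hb]; simpl; intros E.
    apply sig_eq'; simpl.
    pose proof (proj2_sig (constructive_indefinite_description (fun k => a = R2 k) Ha)) as Ea.
    pose proof (proj2_sig (constructive_indefinite_description (fun k => b = R2 k) Hb)) as Eb.
    simpl in Ea, Eb. rewrite E in Ea. congruence.
  - destruct (Hi x0 R HR) as [R1 [[A [HA ->]] H1]].
    assert (HAy : exists y, A y).
    { apply NNPP; intros N. destruct HA as [_ HA]. apply HA.
      exists (fun y => exist (fun y => ~ A y) y (fun Ay => N (ex_intro _ y Ay))).
      intros a b E; apply (f_equal (@proj1_sig _ _)) in E; auto. }
    destruct HAy as [y Hy].
    specialize (H1 y Hy). specialize (HRS _ _ H1 (R2 y) (ex_intro _ y eq_refl)).
    destruct (proj2 (HR2 y) _ HRS) as [y' [Hne Heq]].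
    apply Hinj in Heq. contradiction.
Qed.
End Frame.

Theorem theorem10p2 (K K' : Type) :
  regular_cardinal K -> regular_cardinal K' -> card_lt K K' ->
  (exists A : CAMA K, forall B : CAMA K', ~ cma_iso A B) /\
  (exists F : MKF K, forall G : MKF K', ~ mkf_iso F G).
Proof.
  intros HK HK' HKK. split.
  - exists (A0 K HK). intros B Hiso. apply (A0_not_add K HK K' HKK).
    exact (iso_add K' _ _ Hiso (cama_additive K' B)).
  - exists (F0 K HK). intros G. apply F0_not; auto.
Qed.
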